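(* Consider problem $(\mathcal{P})$ under Assumptions A1 and A2, and let $\{x_k\},\{y_k\},\{d_k\}$ be generated by Algorithm BDCA (see context). Then for every $k$: (i) $\phi(y_k)\le \phi(x_k)-\rho\|d_k\|^2$; (ii) $\phi'(y_k;d_k)\le -\rho\|d_k\|^2$, where $\phi'(y;d)$ denotes the one-sided directional derivative; (iii) if $I(y_k)\subseteq I(x_k)$, then there exists $\delta_k>0$ such that for all $\lambda\in[0,\delta_k]$ one has $y_k+\lambda d_k\in\mathcal{F}$ and $\phi(y_k+\lambda d_k)\le \phi(y_k)-\alpha\lambda^2\|d_k\|^2$. Consequently, the backtracking loop of the algorithm terminates after finitely many reductions.
   Context: Problem $(\mathcal{P})$: minimize $\phi(x):=g(x)-h(x)$ subject to $x\in\mathcal{F}:=\{x\in\mathbb{R}^n:\langle a_i,x\rangle\le b_i,\ i=1,\dots,p\}$, where $g,h:\mathbb{R}^n\to\mathbb{R}\cup\{+\infty\}$ are proper, closed, convex, with conventions $(+\infty)-(+\infty)=+\infty$, $(+\infty)-\lambda=+\infty$, $\lambda-(+\infty)=-\infty$ for real $\lambda$. Assumption A1: $g$ and $h$ are strongly convex on their domains with the same parameter $\rho>0$ (i.e. $g-\frac\rho2\|\cdot\|^2$ and $h-\frac\rho2\|\cdot\|^2$ are convex). Assumption A2: $\partial h(x)\neq\emptyset$ for all $x\in\operatorname{dom}h$; $g$ is continuously differentiable on an open set containing $\operatorname{dom}h$; and $\inf_{x\in\mathcal{F}}\phi(x)>-\infty$. It is implicitly assumed that the iterates below are well defined (they lie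 in $\operatorname{dom}h$). For $\bar x\in\mathcal{F}$, $I(\bar x):=\{i:\langle a_i,\bar x\rangle=b_i\}$. Algorithm BDCA: input $x_0\in\mathcal{F}$, $\alpha>0$, $\beta\in(0,1)$. At iteration $k$: choose $u_k\in\partial h(x_k)$ and let $y_k$ be the unique minimizer of $g(x)-\langle u_k,x\rangle$ over $\mathcal{F}$; set $d_k:=y_k-x_k$; if $d_k=0$ stop and return $x_k$. If $I(y_k)\subseteq I(x_k)$: choose any $\bar\lambda_k\ge 0$, set $\lambda_k:=\bar\lambda_k$ and reduce it (to some value in $[0,\bar\lambda_k]$) so that $y_k+\lambda_kd_k\in\mathcal{F}$; then while $\phi(y_k+\lambda_kd_k)>\phi(y_k)-\alpha\lambda_k^2\|d_k\|^2$, replace $\lambda_k$ by $\beta\lambda_k$. Otherwise set $\lambda_k:=0$. Set $x_{k+1}:=y_k+\lambda_kd_k$ and continue with $k+1$. *)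

(* Defs.v *)
From Stdlib Require Import Reals.
From mathcomp Require Import ssreflect ssrfun ssrbool eqtype ssrnat fintype bigop.
Set Implicit Arguments.
Unset Strict Implicit.
Unset Printing Implicit Defensive.
Open Scope R_scope.

Definition vec (n : nat) := 'I_n -> R.
Definition vadd {n} (x y : vec n) : vec n := fun i => x i + y i.
Definition vsub {n} (x y : vec n) : vec n := fun i => x i - y i.
Definition vscale {n} (t : R) (x : vec n) : vec n := fun i => t * x i.
Definition vzero {n} : vec n := fun _ => 0.
Definition dot {n} (x y : vec n) : R := \big[Rplus/0]_(i < n) (x i * y i).
Definition norm2 {n} (x : vec n) : R := dot x x.
Definition norm {n} (x : vec n) : R := sqrt (norm2 x).

Inductive ER := Fin (r : R) | PInf | MInf.

Definition ER_le (a b : ER) : Prop :=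
  match a, b with
  | MInf, _ => True
  | _, PInf => True
  | Fin x, Fin y => x <= y
  | _, _ => False
  end.
Definition ER_lt (a b : ER) : Prop := ER_le a b /\ a <> b.

Definition ER_sub_real (a : ER) (r : R) : ER :=
  match a with Fin x => Fin (x - r) | PInf => PInf | MInf => MInf end.

(* a - b with the paper's conventions (+oo)-(+oo)=+oo, (+oo)-l=+oo,
   l-(+oo)=-oo.  Cases involving -oo never occur for proper functions;
   they are fixed arbitrarily. *)
Definition ER_minus (a b : ER) : ER :=
  match a, b with
  | PInf, _ => PInf
  | Fin x, Fin y => Fin (x - y)
  | Fin _, PInf => MInf
  | Fin _, MInf => PInf
  | MInf, _ => MInf
  end.

Definition in_dom {n} (f : vec n -> ER) (x : vec n) : Prop :=
  exists r, f x = Fin r.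

Definition proper_fun {n} (f : vec n -> ER) : Prop :=
  (forall x, f x <> MInf) /\ (exists x, f x <> PInf).

Definition convex_fun {n} (f : vec n -> ER) : Prop :=
  forall (x y : vec n) (a b t : R), 0 <= t <= 1 ->
    ER_le (f x) (Fin a) -> ER_le (f y) (Fin b) ->
    ER_le (f (vadd (vscale t x) (vscale (1 - t) y))) (Fin (t * a + (1 - t) * b)).

(* closed: the epigraph is closed (its complement is open) *)
Definition closed_fun {n} (f : vec n -> ER) : Prop :=
  forall (x : vec n) (a : R), ~ ER_le (f x) (Fin a) ->
    exists eps, 0 < eps /\
      forall (y : vec n) (b : R), norm (vsub y x) < eps -> Rabs (b - a) < eps ->
        ~ ER_le (f y) (Fin b).

Definition strongly_convex {n} (rho : R) (f : vec n -> ER) : Prop :=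
  convex_fun (fun x => ER_sub_real (f x) (rho / 2 * norm2 x)).

Definition subgrad {n} (f : vec n -> ER) (x u : vec n) : Prop :=
  exists r, f x = Fin r /\
    forall y, ER_le (Fin (r + dot u (vsub y x))) (f y).

Definition open_set {n} (U : vec n -> Prop) : Prop :=
  forall x, U x -> exists eps, 0 < eps /\ forall y, norm (vsub y x) < eps -> U y.

Definition C1_on_open_superset {n} (f : vec n -> ER) (S : vec n -> Prop) : Prop :=
  exists (U : vec n -> Prop) (grad : vec n -> vec n),
    open_set U /\ (forall x, S x -> U x) /\
    (forall x, U x -> exists r, f x = Fin r /\
       forall eps, 0 < eps -> exists del, 0 < del /\
         forall v, norm v < del -> exists r', f (vadd x v) = Fin r' /\
           Rabs (r' - r - dot (grad x) v) <= eps * norm v) /\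
    (forall x, U x -> forall eps, 0 < eps -> exists del, 0 < del /\
       forall y, U y -> norm (vsub y x) < del -> norm (vsub (grad y) (grad x)) < eps).

(* one-sided directional derivative f'(y; d) = L  (limit as t -> 0+ of
   (f(y + t d) - f(y)) / t, in the extended reals); requires f(y) finite *)
Definition ER_quot (v : ER) (c t : R) : ER :=
  match v with Fin r => Fin ((r - c) / t) | PInf => PInf | MInf => MInf end.

Definition dir_deriv {n} (f : vec n -> ER) (y d : vec n) (L : ER) : Prop :=
  exists fy, f y = Fin fy /\
  let q := fun t => ER_quot (f (vadd y (vscale t d))) fy t in
  match L with
  | Fin l => forall eps, 0 < eps -> exists del, 0 < del /\
       forall t, 0 < t < del -> exists r, q t = Fin r /\ Rabs (r - l) < eps
  | PInf => forall M, exists del, 0 < del /\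
       forall t, 0 < t < del -> ER_lt (Fin M) (q t)
  | MInf => forall M, exists del, 0 < del /\
       forall t, 0 < t < del -> ER_lt (q t) (Fin M)
  end.

Definition feasible {n p} (a : 'I_p -> vec n) (b : 'I_p -> R) (x : vec n) : Prop :=
  forall i, dot (a i) x <= b i.

(* I(y) subset of I(x), active index sets *)
Definition active_subset {n p} (a : 'I_p -> vec n) (b : 'I_p -> R) (y x : vec n) : Prop :=
  forall i, dot (a i) y = b i -> dot (a i) x = b i.

Definition phi {n} (g h : vec n -> ER) (x : vec n) : ER := ER_minus (g x) (h x).

Definition unique_argmin {n p} (a : 'I_p -> vec n) (b : 'I_p -> R)
  (f : vec n -> ER) (y : vec n) : Prop :=
  feasible a b y /\ (forall z, feasible a b z -> ER_le (f y) (f z)) /\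
  (forall z, feasible a b z -> ER_le (f z) (f y) -> z = y).

Definition accepted {n} (g h : vec n -> ER) (alpha : R) (y d : vec n) (lam : R) : Prop :=
  ER_le (phi g h (vadd y (vscale lam d)))
        (ER_sub_real (phi g h y) (alpha * lam ^ 2 * norm2 d)).

(* A run of Algorithm BDCA: x k, u k, y k are the iterates, d_k = y k - x k,
   lam0 k the (feasible) initial trial step, lam k the accepted step.
   If d_k = 0 the algorithm stops; we then extend the sequence constantly. *)
Definition bdca_run {n p} (a : 'I_p -> vec n) (b : 'I_p -> R) (g h : vec n -> ER)
  (alpha beta : R) (x u y : nat -> vec n) (lam lam0 : nat -> R) : Prop :=
  feasible a b (x 0%nat) /\
  forall k : nat,
    let d := vsub (y k) (x k) in
    in_dom h (x k) /\
    subgrad h (x k) (u k) /\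
    unique_argmin a b (fun z => ER_sub_real (g z) (dot (u k) z)) (y k) /\
    (d = vzero -> x (S k) = x k) /\
    (d <> vzero ->
      (active_subset a b (y k) (x k) ->
         0 <= lam0 k /\ feasible a b (vadd (y k) (vscale (lam0 k) d)) /\
         exists j : nat, lam k = beta ^ j * lam0 k /\
           accepted g h alpha (y k) d (lam k) /\
           forall i : nat, (i < j)%N ->
             ~ accepted g h alpha (y k) d (beta ^ i * lam0 k)) /\
      (~ active_subset a b (y k) (x k) -> lam k = 0) /\
      x (S k) = vadd (y k) (vscale (lam k) d)).

(* Main.v *)
Require Import Defs.
From Stdlib Require Import Reals Lra Psatz Classical FunctionalExtensionality.
From HB Require Import structures.
From mathcomp Require Import ssreflect ssrfun ssrbool eqtype ssrnat fintype bigop.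
Open Scope R_scope.
Set Implicit Arguments.
Unset Strict Implicit.

HB.instance Definition _ := Monoid.isComLaw.Build R 0 Rplus (fun x y z => esym (Rplus_assoc x y z)) Rplus_comm Rplus_0_l.

Lemma sumD n (F G : 'I_n -> R) :
  \big[Rplus/0]_(i < n) (F i + G i) = \big[Rplus/0]_(i < n) F i + \big[Rplus/0]_(i < n) G i.
Proof. by rewrite big_split. Qed.

Lemma sumZ n c (F : 'I_n -> R) :
  \big[Rplus/0]_(i < n) (c * F i) = c * \big[Rplus/0]_(i < n) F i.
Proof.
apply: (big_rec2 (fun s1 s2 => s1 = c * s2)); first ring.
by move=> i y1 y2 _ ->; ring.
Qed.

Lemma sumN n (F : 'I_n -> R) :
  \big[Rplus/0]_(i < n) (- F i) = - \big[Rplus/0]_(i < n) F i.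
Proof.
apply: (big_rec2 (fun s1 s2 => s1 = - s2)); first ring.
by move=> i y1 y2 _ ->; ring.
Qed.

Lemma sum_ge0 n (F : 'I_n -> R) : (forall i, 0 <= F i) -> 0 <= \big[Rplus/0]_(i < n) F i.
Proof.
move=> H; apply: (big_ind (fun s => 0 <= s)); [lra | move=> u v Hu Hv; lra | move=> i _; apply H].
Qed.

Lemma sum_ge_term n (F : 'I_n -> R) j : (forall i, 0 <= F i) -> F j <= \big[Rplus/0]_(i < n) F i.
Proof.
move=> H; rewrite (bigD1 j) //=.
have : 0 <= \big[Rplus/0]_(i < n | i != j) F i.
  apply: (big_ind (fun s => 0 <= s)); [lra | move=> u v Hu Hv; lra | move=> i _; apply H].
move=> Hs; rewrite -{1}(Rplus_0_r (F j)); exact: Rplus_le_compat_l.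
Qed.

Lemma dot_addl n (x y z : vec n) : dot (vadd x y) z = dot x z + dot y z.
Proof. rewrite /dot -sumD; apply: eq_bigr => i _; rewrite /vadd; ring. Qed.
Lemma dot_subl n (x y z : vec n) : dot (vsub x y) z = dot x z - dot y z.
Proof.
rewrite /dot /Rminus -sumN -sumD; apply: eq_bigr => i _; rewrite /vsub; ring.
Qed.
Lemma dot_scalel n t (x z : vec n) : dot (vscale t x) z = t * dot x z.
Proof. rewrite /dot -(sumZ t); apply: eq_bigr => i _; rewrite /vscale; ring. Qed.
Lemma dot_comm n (x y : vec n) : dot x y = dot y x.
Proof. rewrite /dot; apply: eq_bigr => i _; ring. Qed.
Lemma dot_addr n (x y z : vec n) : dot z (vadd x y) = dot z x + dot z y.
Proof. by rewrite dot_comm dot_addl !(dot_comm z). Qed.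
Lemma dot_subr n (x y z : vec n) : dot z (vsub x y) = dot z x - dot z y.
Proof. by rewrite dot_comm dot_subl !(dot_comm z). Qed.
Lemma dot_scaler n t (x z : vec n) : dot z (vscale t x) = t * dot z x.
Proof. by rewrite dot_comm dot_scalel (dot_comm z). Qed.
Lemma dot0r n (z : vec n) : dot z vzero = 0.
Proof. rewrite /dot big1 // => i _; rewrite /vzero; ring. Qed.

Lemma norm2_ge0 n (x : vec n) : 0 <= norm2 x.
Proof. apply: sum_ge0 => i; nra. Qed.

Lemma norm2_pos n (x : vec n) : x <> vzero -> 0 < norm2 x.
Proof.
move=> Hx.
have [i Hi] : exists i, x i <> 0.
  apply: NNPP => Hn; apply: Hx; apply: functional_extensionality => i.
  apply: NNPP => Hi; apply: Hn; exists i; exact Hi.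
have := @sum_ge_term n (fun i => x i * x i) i (fun j => ltac:(nra)).
rewrite /norm2 /dot. nra.
Qed.

Lemma norm2_scale n t (x : vec n) : norm2 (vscale t x) = t * t * norm2 x.
Proof. rewrite /norm2 dot_scalel dot_scaler; ring. Qed.

Lemma norm_scale n t (x : vec n) : norm (vscale t x) = Rabs t * norm x.
Proof.
rewrite /norm norm2_scale sqrt_mult_alt; last nra.
by rewrite -sqrt_Rsqr_abs.
Qed.

Lemma norm2_comb n t s (x y : vec n) :
  norm2 (vadd (vscale t x) (vscale s y)) = t*t*norm2 x + 2*t*s*dot x y + s*s*norm2 y.
Proof.
rewrite /norm2 !dot_addl !dot_addr !dot_scalel !dot_scaler (dot_comm y x); ring.
Qed.

Lemma norm2_sub n (x y : vec n) : norm2 (vsub x y) = norm2 x - 2*dot x y + norm2 y.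
Proof. rewrite /norm2 !dot_subl !dot_subr (dot_comm y x); ring. Qed.

Lemma ER_le_trans_fin a e b : ER_le (Fin a) e -> ER_le e (Fin b) -> a <= b.
Proof. case: e => [r||] /=; lra. Qed.

Lemma lim0 A B C : (forall t, 0 < t < 1 -> A <= B + t*C) -> A <= B.
Proof.
move=> H; apply: Rnot_lt_le => HBA.
set t := Rmin (1/2) ((A - B) / (2 * (Rabs C + 1))).
have Hc := Rabs_pos C.
have Hq : 0 < (A - B) / (2 * (Rabs C + 1)).
  apply: Rdiv_lt_0_compat; lra.
have Ht0 : 0 < t by apply: Rmin_glb_lt; lra.
have Ht1 : t < 1 by have := Rmin_l (1/2) ((A - B) / (2 * (Rabs C + 1))); rewrite -/t; lra.
have Ht2 : t <= (A - B) / (2 * (Rabs C + 1)) by apply: Rmin_r.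
have := H t (conj Ht0 Ht1).
have HtC : t * C <= t * Rabs C by apply: Rmult_le_compat_l; [lra | apply: Rle_abs].
have : t * (2 * (Rabs C + 1)) <= A - B.
  have := Rmult_le_compat_r (2 * (Rabs C + 1)) _ _ (ltac:(lra)) Ht2.
  rewrite /Rdiv Rmult_assoc Rinv_l; lra.
nra.
Qed.

Lemma sc_ineq n rho (f : vec n -> ER) x y fx fy t :
  strongly_convex rho f -> f x = Fin fx -> f y = Fin fy -> 0 <= t <= 1 ->
  ER_le (f (vadd (vscale t x) (vscale (1-t) y)))
    (Fin (t*fx + (1-t)*fy - rho/2 * t*(1-t) * norm2 (vsub x y))).
Proof.
move=> H hx hy ht.
have := H x y (fx - rho/2*norm2 x) (fy - rho/2*norm2 y) t ht.
rewrite /ER_sub_real hx hy /=.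
move/(_ (Rle_refl _) (Rle_refl _)).
rewrite norm2_comb norm2_sub.
case: (f _) => [r||] //= Hr. nra.
Qed.

Lemma feas_conv n p (a : 'I_p -> vec n) b x y t :
  feasible a b x -> feasible a b y -> 0 <= t <= 1 ->
  feasible a b (vadd (vscale t x) (vscale (1-t) y)).
Proof.
move=> Hx Hy ht i; rewrite dot_addr !dot_scaler.
have := Hx i; have := Hy i; nra.
Qed.

Lemma pow_le1 (be : R) j : 0 <= be <= 1 -> 0 <= be ^ j <= 1.
Proof.
move=> Hb; elim: j => [|j IH] /=; first lra.
split; [apply: Rmult_le_pos; lra | nra].
Qed.

Lemma finite_min p (Q : 'I_p -> R -> Prop) :
  (forall i, exists e, 0 < e /\ forall l, 0 <= l <= e -> Q i l) ->
  exists e, 0 < e /\ forall i l, 0 <= l <= e -> Q i l.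
Proof.
move=> H.
suff : forall m, exists e, 0 < e /\ forall (i : 'I_p) l, (i < m)%N -> 0 <= l <= e -> Q i l.
  move/(_ p) => [e [He He']]; exists e; split => // i l; apply: He'; exact: ltn_ord.
elim => [|m [e [He IH]]].
  by exists 1; split; [lra | move=> i l].
case: (ltnP m p) => Hm.
- have [e' [He' H']] := H (Ordinal Hm).
  exists (Rmin e e'); split; first by apply: Rmin_glb_lt.
  move=> i l Hi Hl.
  have Hl1 := Rmin_l e e'; have Hl2 := Rmin_r e e'.
  rewrite ltnS leq_eqVlt in Hi; case/orP: Hi => Hi.
  + have -> : i = Ordinal Hm by apply: val_inj; exact/eqP.
    apply: H'; lra.
  + apply: IH => //; lra.
- exists e; split => // i l Hi Hl; apply: IH => //.
  by apply: (leq_trans (ltn_ord i)).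
Qed.

Lemma h_ineq n (h : vec n -> ER) rho X U Y hX hY :
  0 < rho -> strongly_convex rho h -> h X = Fin hX -> h Y = Fin hY -> subgrad h X U ->
  dot U (vsub Y X) + rho/2 * norm2 (vsub Y X) <= hY - hX.
Proof.
move=> Hr Hs hx hy [r [Hr' Hsub]].
rewrite hx in Hr'; case: Hr' => Er; subst r.
have HN := norm2_ge0 (vsub Y X).
apply: (@lim0 _ _ (rho/2 * norm2 (vsub Y X))) => t Ht.
have H1 := sc_ineq Hs hy hx (ltac:(lra) : 0 <= t <= 1).
have H2 := Hsub (vadd (vscale t Y) (vscale (1 - t) X)).
have := ER_le_trans_fin H2 H1.
rewrite dot_subr dot_addr !dot_scaler => H3.
rewrite dot_subr.
apply: (Rmult_le_reg_l t); first lra.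
nra.
Qed.

Lemma g_ineq n p (a : 'I_p -> vec n) b (g : vec n -> ER) rho X U Y gX gY :
  0 < rho -> strongly_convex rho g -> g X = Fin gX -> g Y = Fin gY ->
  feasible a b X ->
  unique_argmin a b (fun z => ER_sub_real (g z) (dot U z)) Y ->
  gY - dot U Y + rho/2 * norm2 (vsub Y X) <= gX - dot U X.
Proof.
move=> Hr Hs gx gy HX [HY [Hmin _]].
have HN := norm2_ge0 (vsub Y X).
have HNs : norm2 (vsub X Y) = norm2 (vsub Y X) by rewrite !norm2_sub (dot_comm X); ring.
apply: (@lim0 _ _ (rho/2 * norm2 (vsub Y X))) => t Ht.
have H1 := sc_ineq Hs gx gy (ltac:(lra) : 0 <= t <= 1).
have H2 := Hmin _ (feas_conv HX HY (ltac:(lra) : 0 <= t <= 1)).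
rewrite gy HNs in H1 H2 *.
move: H1 H2; rewrite dot_addr !dot_scaler.
case: (g _) => [r||] //= H1 H2.
apply: (Rmult_le_reg_l t); first lra.
nra.
Qed.

Lemma abs_le x e : Rabs x <= e -> - e <= x <= e.
Proof. split_Rabs; lra. Qed.

Lemma norm_ge0 n (x : vec n) : 0 <= norm x.
Proof. exact: sqrt_pos. Qed.

Lemma grad_opt n p (a : 'I_p -> vec n) b (g : vec n -> ER) X U Y gY (G0 : vec n) :
  g Y = Fin gY -> feasible a b X ->
  unique_argmin a b (fun z => ER_sub_real (g z) (dot U z)) Y ->
  (forall eps, 0 < eps -> exists del, 0 < del /\ forall v, norm v < del ->
     exists r', g (vadd Y v) = Fin r' /\ Rabs (r' - gY - dot G0 v) <= eps * norm v) ->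
  dot G0 (vsub Y X) <= dot U (vsub Y X).
Proof.
move=> gy HX [HY [Hmin _]] Hd.
set D := vsub Y X.
have HnD := norm_ge0 D.
apply: (@lim0 _ _ (norm D)) => t Ht.
have [del [Hdel Hv]] := Hd t (proj1 Ht).
set s := Rmin (1/2) (del / (2 * (norm D + 1))).
have Hq : 0 < del / (2 * (norm D + 1)) by apply: Rdiv_lt_0_compat; lra.
have Hs0 : 0 < s by apply: Rmin_glb_lt; lra.
have Hs1 : s < 1 by have := Rmin_l (1/2) (del / (2 * (norm D + 1))); rewrite -/s; lra.
have Hs2 : s <= del / (2 * (norm D + 1)) by apply: Rmin_r.
have Hs3 : s * (2 * (norm D + 1)) <= del.
  have := Rmult_le_compat_r (2 * (norm D + 1)) _ _ (ltac:(lra)) Hs2.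
  rewrite /Rdiv Rmult_assoc Rinv_l; lra.
have Hnv : norm (vscale (- s) D) < del.
  rewrite norm_scale Rabs_Ropp Rabs_pos_eq; nra.
have [r' [Hr' Hab]] := Hv _ Hnv.
have Heq : vadd Y (vscale (- s) D) = vadd (vscale s X) (vscale (1 - s) Y).
  apply: functional_extensionality => i; rewrite /vadd /vscale /D /vsub; ring.
have H2 := Hmin _ (feas_conv HX HY (ltac:(lra) : 0 <= s <= 1)).
rewrite -Heq Hr' gy /= in H2.
move: Hab; rewrite norm_scale Rabs_Ropp (Rabs_pos_eq s (ltac:(lra) : 0 <= s)).
rewrite dot_scaler => /abs_le Hab.
move: H2; rewrite dot_addr dot_scaler /D dot_subr => H2.
rewrite -/D in Hab *.
rewrite /D dot_subr in Hab *.
apply: (Rmult_le_reg_l s); first lra.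
nra.
Qed.

Lemma h_quot_lb n (h : vec n -> ER) rho X U Y hX hY t r :
  0 < rho -> strongly_convex rho h -> h X = Fin hX -> h Y = Fin hY ->
  dot U (vsub Y X) + rho/2 * norm2 (vsub Y X) <= hY - hX ->
  0 < t -> h (vadd Y (vscale t (vsub Y X))) = Fin r ->
  t * (dot U (vsub Y X) + rho * norm2 (vsub Y X)) <= r - hY.
Proof.
move=> Hr Hs hx hy H6 Ht hr.
set D := vsub Y X in H6 hr *.
set s := t / (1 + t).
have Hs1 : s * (1 + t) = t by rewrite /s; field; lra.
have Hs2 : (1 - s) * (1 + t) = 1 by rewrite /s; field; lra.
have Hs0 : 0 <= s <= 1.
  rewrite /s; split; first (apply: Rmult_le_pos; [lra | apply: Rlt_le; apply: Rinv_0_lt_compat; lra]).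
  apply: (Rmult_le_reg_r (1 + t)); [lra | rewrite Hs1; lra].
clearbody s.
have H1 := sc_ineq Hs hx hr Hs0.
have Heq : vadd (vscale s X) (vscale (1 - s) (vadd Y (vscale t D))) = Y.
  apply: functional_extensionality => i; rewrite /vadd /vscale /D /vsub.
  have -> : s * X i + (1 - s) * (Y i + t * (Y i - X i)) =
            ((1 - s) * (1 + t)) * Y i + (s - (1 - s) * t) * X i by ring.
  have -> : s - (1 - s) * t = 0 by nra.
  rewrite Hs2; ring.
have Hv : vsub X (vadd Y (vscale t D)) = vscale (- (1 + t)) D.
  apply: functional_extensionality => i; rewrite /vadd /vscale /D /vsub; ring.
rewrite Heq hy Hv norm2_scale /= in H1.
have HN := norm2_ge0 D.
have H2 : (1 + t) * hY <= t * hX + r - rho / 2 * t * (1 + t) * norm2 D.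
  have := Rmult_le_compat_l (1 + t) _ _ (ltac:(lra)) H1.
  have -> : (1 + t) * (s * hX + (1 - s) * r - rho / 2 * s * (1 - s) * (- (1 + t) * - (1 + t) * norm2 D))
     = (s * (1 + t)) * hX + ((1 - s) * (1 + t)) * r - rho / 2 * (s * (1 + t)) * ((1 - s) * (1 + t)) * (1 + t) * norm2 D by ring.
  rewrite Hs1 Hs2; lra.
clear Heq Hv hr H1.
clearbody D.
have := Rmult_le_compat_l t _ _ (Rlt_le _ _ Ht) H6.
have : 0 <= t * t * norm2 D by apply: Rmult_le_pos; nra.
nra.
Qed.

Lemma h_mono n (h : vec n -> ER) Y D hY s t rt :
  proper_fun h -> convex_fun h -> h Y = Fin hY -> 0 < s < t ->
  h (vadd Y (vscale t D)) = Fin rt ->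
  exists rs, h (vadd Y (vscale s D)) = Fin rs /\ (rs - hY) * t <= (rt - hY) * s.
Proof.
move=> [Hp _] Hc hy Hst ht.
set l := s / t.
have Hl : 0 <= l <= 1.
  rewrite /l; split; first (apply: Rmult_le_pos; [lra | apply: Rlt_le; apply: Rinv_0_lt_compat; lra]).
  apply: (Rmult_le_reg_r t); [lra | rewrite /Rdiv Rmult_assoc Rinv_l; lra].
have Hlt : l * t = s by rewrite /l; field; lra.
have := Hc (vadd Y (vscale t D)) Y rt hY l Hl; rewrite ht hy /= => /(_ (Rle_refl _) (Rle_refl _)).
have -> : vadd (vscale l (vadd Y (vscale t D))) (vscale (1 - l) Y) = vadd Y (vscale s D).
  apply: functional_extensionality => i; rewrite /vadd /vscale -Hlt; ring.
have := Hp (vadd Y (vscale s D)).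
case: (h _) => [rs||] //= _ H.
exists rs; split => //.
have := Rmult_le_compat_r t _ _ (ltac:(lra)) H.
have -> : (l * rt + (1 - l) * hY) * t = (l * t) * rt + (t - l * t) * hY by ring.
rewrite Hlt; lra.
Qed.

Lemma le_div t c x : 0 < t -> t * c <= x -> c <= x / t.
Proof.
move=> Ht H; apply: (Rmult_le_reg_l t) => //.
have -> : t * (x / t) = x by field; lra.
exact H.
Qed.

Lemma div_le t c x : 0 < t -> c <= x / t -> t * c <= x.
Proof.
move=> Ht H; have := Rmult_le_compat_l t _ _ (Rlt_le _ _ Ht) H.
have -> : t * (x / t) = x by field; lra.
done.
Qed.

Lemma div_lt t c x : 0 < t -> x / t < c -> x < t * c.
Proof.
move=> Ht H; have := Rmult_lt_compat_l t _ _ Ht H.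
have -> : t * (x / t) = x by field; lra.
done.
Qed.

Lemma small_norm n (D : vec n) del t : 0 < del -> 0 < t < del / (norm D + 1) ->
  norm (vscale t D) < del.
Proof.
move=> Hd Ht; have HnD := norm_ge0 D.
rewrite norm_scale Rabs_pos_eq; last lra.
have : t * (norm D + 1) < del.
  have := Rmult_lt_compat_r (norm D + 1) _ _ (ltac:(lra)) (proj2 Ht).
  rewrite /Rdiv Rmult_assoc Rinv_l; lra.
nra.
Qed.

Lemma part_ii n (g h : vec n -> ER) Y D gY hY (G0 : vec n) c :
  proper_fun h -> convex_fun h -> g Y = Fin gY -> h Y = Fin hY ->
  (forall eps, 0 < eps -> exists del, 0 < del /\ forall v, norm v < del ->
     exists r', g (vadd Y v) = Fin r' /\ Rabs (r' - gY - dot G0 v) <= eps * norm v) ->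
  (forall t r, 0 < t -> h (vadd Y (vscale t D)) = Fin r -> t * c <= r - hY) ->
  exists L, dir_deriv (phi g h) Y D L /\ ER_le L (Fin (dot G0 D - c)).
Proof.
move=> Hph Hch gy hy Hd Hlb.
have HnD := norm_ge0 D.
have [del1 [Hdel1 Hg1]] := Hd 1 Rlt_0_1.
case: (classic (exists t0 r0, 0 < t0 /\ h (vadd Y (vscale t0 D)) = Fin r0)) =>
  [[t0 [r0 [Ht0 Hr0]]] | Hno].
2:{
  exists MInf; split => //.
  exists (gY - hY); split; first by rewrite /phi gy hy.
  cbv zeta iota beta.
  move=> M; exists (del1 / (norm D + 1)); split; first by apply: Rdiv_lt_0_compat; lra.
  move=> t Ht.
  have [rg [Hrg _]] := Hg1 _ (small_norm Hdel1 Ht).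
  have Hh : h (vadd Y (vscale t D)) = PInf.
    case E: (h (vadd Y (vscale t D))) => [r||] //.
    - by exfalso; apply: Hno; exists t, r; split => //; lra.
    - by exfalso; apply: (proj1 Hph _ E).
  rewrite /phi Hrg Hh /=; split => //.
}
pose E z := exists t r, (0 < t <= t0) /\ h (vadd Y (vscale t D)) = Fin r /\ z = - ((r - hY) / t).
have Hb : is_upper_bound E (- c).
  move=> z [t [r [Ht [Hr ->]]]].
  have := le_div (proj1 Ht) (Hlb t r (proj1 Ht) Hr); lra.
have Hne : exists z, E z by exists (- ((r0 - hY) / t0)), t0, r0; split => //; lra.
have [m [Hm1 Hm2]] := @completeness E (ex_intro _ (- c) Hb) Hne.
have P1 : forall t r, 0 < t <= t0 -> h (vadd Y (vscale t D)) = Fin r -> - m <= (r - hY) / t.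
  move=> t r Ht Hr; have := Hm1 (- ((r - hY) / t)) (ex_intro _ t (ex_intro _ r (conj Ht (conj Hr erefl)))).
  lra.
have P2 : c <= - m by have := Hm2 _ Hb; lra.
have P3 : forall eps, 0 < eps -> exists t1 r1, (0 < t1 <= t0) /\ h (vadd Y (vscale t1 D)) = Fin r1 /\
            (r1 - hY) / t1 < - m + eps.
  move=> eps Heps; apply: NNPP => Hn.
  have : is_upper_bound E (m - eps).
    move=> z [t [r [Ht [Hr ->]]]].
    have : ~ ((r - hY) / t < - m + eps) by move=> Hc; apply: Hn; exists t, r.
    lra.
  move/Hm2; lra.
exists (Fin (dot G0 D - - m)); split; last by rewrite /=; lra.
exists (gY - hY); split; first by rewrite /phi gy hy.
cbv zeta iota beta.
move=> eps Heps.
have [t1 [r1 [Ht1 [Hr1 Hq1]]]] := P3 (eps / 2) (ltac:(lra)).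
set e2 := eps / (2 * (norm D + 1)).
have He2 : 0 < e2 by apply: Rdiv_lt_0_compat; lra.
have He2' : e2 * norm D <= eps / 2.
  have : e2 * (2 * (norm D + 1)) = eps by rewrite /e2; field; lra.
  nra.
have [del2 [Hdel2 Hg2]] := Hd e2 He2.
have Hq2 : 0 < del2 / (norm D + 1) by apply: Rdiv_lt_0_compat; lra.
exists (Rmin t1 (del2 / (norm D + 1))); split; first by apply: Rmin_glb_lt; lra.
move=> t [Ht Htd].
have Htt1 : t < t1 by have := Rmin_l t1 (del2 / (norm D + 1)); lra.
have Htd2 : t < del2 / (norm D + 1) by have := Rmin_r t1 (del2 / (norm D + 1)); lra.
have [rg [Hrg Habs]] := Hg2 _ (small_norm Hdel2 (conj Ht Htd2)).
have [rt [Hrt Hmono]] := h_mono Hph Hch hy (conj Ht Htt1) Hr1.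
have HP1 := div_le Ht (P1 t rt (ltac:(lra)) Hrt).
have Hq1' := div_lt (proj1 Ht1) Hq1.
rewrite /phi Hrg Hrt /=.
exists ((rg - rt - (gY - hY)) / t); split => //.
move: Habs; rewrite dot_scaler norm_scale (Rabs_pos_eq t (ltac:(lra) : 0 <= t)).
move/abs_le => Habs.
set w := (rg - rt - (gY - hY)) / t - (dot G0 D - - m).
have Hw : w * t = (rg - gY - t * dot G0 D) - (rt - hY - t * - m) by rewrite /w; field; lra.
clearbody w e2.
have Hup : rt - hY < t * (- m + eps / 2).
  have : (rt - hY) * t1 < t * (- m + eps / 2) * t1 by nra.
  nra.
have Hwl : w * t < (e2 * norm D + eps / 2) * t by nra.
have Hwr : - (e2 * norm D + eps / 2) * t < w * t by nra.
have Hw1 : w < e2 * norm D + eps / 2 by nra.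
have Hw2 : - (e2 * norm D + eps / 2) < w by nra.
apply: Rabs_def1; lra.
Qed.

Lemma ER_le_weaken L a b : ER_le L (Fin a) -> a <= b -> ER_le L (Fin b).
Proof. case: L => [r||] //=; lra. Qed.

Lemma vadd0 n (Y D : vec n) : vadd Y (vscale 0 D) = Y.
Proof. apply: functional_extensionality => i; rewrite /vadd /vscale; ring. Qed.

Lemma feas_dir n p (a : 'I_p -> vec n) b X Y :
  feasible a b Y -> active_subset a b Y X ->
  exists e, 0 < e /\ forall i l, 0 <= l <= e -> dot (a i) (vadd Y (vscale l (vsub Y X))) <= b i.
Proof.
move=> HY Hact; apply: finite_min => i.
have E l : dot (a i) (vadd Y (vscale l (vsub Y X))) = dot (a i) Y + l * (dot (a i) Y - dot (a i) X).
  by rewrite dot_addr dot_scaler dot_subr.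
case: (Req_dec (dot (a i) Y) (b i)) => Hi.
  exists 1; split; first lra; move=> l _; rewrite E Hi (Hact i Hi); lra.
have HYi := HY i.
case: (Rle_lt_dec (dot (a i) Y - dot (a i) X) 0) => Hs.
  exists 1; split; first lra; move=> l Hl; rewrite E; nra.
exists ((b i - dot (a i) Y) / (dot (a i) Y - dot (a i) X)); split.
  apply: Rdiv_lt_0_compat; lra.
move=> l [Hl0 Hl1]; rewrite E.
have := div_le Hs (Rle_trans _ _ _ (Rle_refl l) Hl1); rewrite Rmult_comm; lra.
Qed.

Lemma part_iii n p (a : 'I_p -> vec n) b (g h : vec n -> ER) rho alpha X Y fy :
  0 < rho -> 0 < alpha -> phi g h Y = Fin fy -> feasible a b Y -> active_subset a b Y X ->
  (exists L, dir_deriv (phi g h) Y (vsub Y X) L /\ ER_le L (Fin (- (rho * norm2 (vsub Y X))))) ->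
  exists delta, 0 < delta /\ forall l, 0 <= l <= delta ->
    feasible a b (vadd Y (vscale l (vsub Y X))) /\ accepted g h alpha Y (vsub Y X) l.
Proof.
move=> Hrho Ha Hfy HY Hact [L [HL HLe]].
have [e [He Hfe]] := feas_dir HY Hact.
set D := vsub Y X in HL HLe Hfe *.
case: (classic (D = vzero)) => HD.
  exists e; split => // l Hl; split; first by move=> i; apply: Hfe.
  rewrite /accepted HD.
  have -> : vadd Y (vscale l vzero) = Y.
    apply: functional_extensionality => i; rewrite /vadd /vscale /vzero; ring.
  rewrite Hfy /= /norm2 dot0r; lra.
have HN := norm2_pos HD.
have [M0 [del [HM0 [Hdel Hq]]]] : exists M0 del, M0 < 0 /\ 0 < del /\ forall t, 0 < t < del ->
   ER_quot (phi g h (vadd Y (vscale t D))) fy t = MInf \/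
   exists r, ER_quot (phi g h (vadd Y (vscale t D))) fy t = Fin r /\ r < M0.
  move: HL => [fy' [Hfy' HL]].
  rewrite Hfy in Hfy'; case: Hfy' => Efy; subst fy'.
  move: HL HLe; case: L => [l0||] HL HLe //=.
  - simpl in HLe.
    have [del [Hdel H]] := HL (- l0 / 2) (ltac:(nra)).
    exists (l0 / 2), del; split; first nra; split => // t Ht.
    right; have [r [Hr Hr']] := H t Ht; exists r; split => //.
    move/Rabs_def2: Hr'; lra.
  - have [del [Hdel H]] := HL (-1).
    exists (-1), del; split; first lra; split => // t Ht.
    move: (H t Ht); case: (ER_quot _ _ _) => [r||] [H1 H2] //=; [right | by left].
    exists r; split => //; simpl in H1.
    have : r <> -1 by move=> E; apply: H2; rewrite E.
    lra.
set da := Rmin (del / 2) (- M0 / (alpha * norm2 D)).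
have Hda1 : 0 < - M0 / (alpha * norm2 D) by apply: Rdiv_lt_0_compat; nra.
have Hda : 0 < da by apply: Rmin_glb_lt; lra.
exists (Rmin e da); split; first by apply: Rmin_glb_lt.
move=> l [Hl0 Hl1].
have Hle := Rmin_l e da; have Hlda := Rmin_r e da.
split; first by move=> i; apply: Hfe; lra.
have Hl2 : l <= del / 2 by have := Rmin_l (del / 2) (- M0 / (alpha * norm2 D)); rewrite -/da; lra.
have Hl3 : l <= - M0 / (alpha * norm2 D) by have := Rmin_r (del / 2) (- M0 / (alpha * norm2 D)); rewrite -/da; lra.
rewrite /accepted Hfy.
case: (Req_dec l 0) => [->|Hl].
  rewrite vadd0 Hfy /=; lra.
have Hlp : 0 < l by lra.
have HlM : alpha * norm2 D * l <= - M0.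
  have := div_le (ltac:(nra) : 0 < alpha * norm2 D) (Rle_trans _ _ _ (Rle_refl l) Hl3); lra.
move: (Hq l (ltac:(lra))).
case: (phi g h _) => [v||] //=.
- case => [//|[r [Er Hr]]]; case: Er => Er.
  have : v - fy < l * M0.
    have := Rmult_lt_compat_l l _ _ Hlp Hr; rewrite -Er.
    have -> : l * ((v - fy) / l) = v - fy by field; lra.
    done.
  nra.
- by case => [//|[r [Er _]]].
Qed.

Lemma backtrack n p (a : 'I_p -> vec n) b (g h : vec n -> ER) alpha beta Y D :
  0 < beta < 1 ->
  (exists delta, 0 < delta /\ forall l, 0 <= l <= delta ->
    feasible a b (vadd Y (vscale l D)) /\ accepted g h alpha Y D l) ->
  forall l0, 0 <= l0 -> exists j : nat, accepted g h alpha Y D (beta ^ j * l0).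
Proof.
move=> Hb [delta [Hd H]] l0 Hl0.
case: (Req_dec l0 0) => [->|Hl].
  exists 0%nat; apply: (proj2 (H _ _)); rewrite Rmult_0_r; lra.
have [N HN] := pow_lt_1_zero beta (ltac:(rewrite Rabs_pos_eq; lra)) (delta / l0)
  (ltac:(apply: Rdiv_lt_0_compat; lra)).
exists N; apply: (proj2 (H _ _)).
have := HN N (le_n N); rewrite Rabs_pos_eq; last (apply: pow_le; lra).
move=> HNl.
have := pow_le beta N (ltac:(lra)).
have : beta ^ N * l0 < delta.
  have := Rmult_lt_compat_r l0 _ _ (ltac:(lra)) HNl.
  have -> : delta / l0 * l0 = delta by field; lra.
  done.
move=> *; split; nra.
Qed.

Theorem proposition3p2 (n p : nat) (a : 'I_p -> vec n) (b : 'I_p -> R)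
  (g h : vec n -> ER) (rho alpha beta : R)
  (x u y : nat -> vec n) (lam lam0 : nat -> R) :
  (* g, h proper, closed, convex *)
  proper_fun g -> proper_fun h -> closed_fun g -> closed_fun h ->
  convex_fun g -> convex_fun h ->
  (* A1 *)
  0 < rho -> strongly_convex rho g -> strongly_convex rho h ->
  (* A2 *)
  (forall z, in_dom h z -> exists v, subgrad h z v) ->
  C1_on_open_superset g (in_dom h) ->
  (exists M : R, forall z, feasible a b z -> ER_le (Fin M) (phi g h z)) ->
  (* algorithm parameters and run *)
  0 < alpha -> 0 < beta < 1 ->
  bdca_run a b g h alpha beta x u y lam lam0 ->
  forall k : nat,
    let d := vsub (y k) (x k) in
    (* (i) *)
    ER_le (phi g h (y k)) (ER_sub_real (phi g h (x k)) (rho * norm2 d)) /\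
    (* (ii) *)
    (exists L, dir_deriv (phi g h) (y k) d L /\ ER_le L (Fin (- (rho * norm2 d)))) /\
    (* (iii) *)
    (active_subset a b (y k) (x k) ->
       (exists delta, 0 < delta /\
          forall l, 0 <= l <= delta ->
            feasible a b (vadd (y k) (vscale l d)) /\ accepted g h alpha (y k) d l) /\
       (forall l0, 0 <= l0 -> feasible a b (vadd (y k) (vscale l0 d)) ->
          exists j : nat, accepted g h alpha (y k) d (beta ^ j * l0))).
Proof.
move=> Hpg Hph _ _ _ Hch Hrho Hsg Hsh _ HC1 _ Ha Hb [Hx0 Hrun].
have Hfeas : forall k, feasible a b (x k).
  elim => [//|k IH].
  move: (Hrun k); cbv zeta => [[_ [_ [[HyF _] [H0 H1]]]]].
  case: (classic (vsub (y k) (x k) = vzero)) => HD; first by rewrite H0.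
  have [Hact [Hnact ->]] := H1 HD.
  case: (classic (active_subset a b (y k) (x k))) => HA.
  - have [Hl0 [Hf [j [-> _]]]] := Hact HA.
    have Hbj := pow_le1 j (ltac:(lra) : 0 <= beta <= 1).
    have -> : vadd (y k) (vscale (beta ^ j * lam0 k) (vsub (y k) (x k))) =
      vadd (vscale (beta ^ j) (vadd (y k) (vscale (lam0 k) (vsub (y k) (x k))))) (vscale (1 - beta ^ j) (y k)).
      apply: functional_extensionality => i; rewrite /vadd /vscale /vsub; ring.
    exact: feas_conv.
  - by rewrite (Hnact HA) vadd0.
move: HC1 => [Uo [grad [_ [HsubU [Hdiff _]]]]].
have gfin : forall z, in_dom h z -> exists r, g z = Fin r.
  move=> z Hz; have [r [Hr _]] := Hdiff z (HsubU z Hz); by exists r.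
move=> k; cbv zeta.
move: (Hrun k); cbv zeta => [[HhX [Hsub [Hmin [H0 H1]]]]].
set X := x k in HhX Hsub Hmin H0 H1 *.
set Y := y k in HhX Hsub Hmin H0 H1 *.
set U := u k in HhX Hsub Hmin H0 H1 *.
have HX := Hfeas k; rewrite -/X in HX.
have [hX HhX'] := HhX.
have [gX HgX] := gfin X HhX.
have [gY HgY] : exists gY, g Y = Fin gY.
  have := proj1 (proj2 Hmin) X HX; rewrite /ER_sub_real HgX.
  case E: (g Y) => [r||] // _; first by exists r.
  by exfalso; apply: (proj1 Hpg _ E).
have HhY : in_dom h Y.
  case: (classic (vsub Y X = vzero)) => HD.
    have -> : Y = X.
      apply: functional_extensionality => i.
      have := f_equal (fun f => f i) HD; rewrite /vsub /vzero; lra.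
    exact HhX.
  have [Hact [Hnact Hxs]] := H1 HD.
  have HhXs : in_dom h (x k.+1) by move: (Hrun k.+1); cbv zeta => [[? _]].
  case: (classic (active_subset a b Y X)) => HA.
  - have [_ [_ [j [_ [Hacc _]]]]] := Hact HA.
    move: Hacc; rewrite /accepted -Hxs.
    have [gS HgS] := gfin _ HhXs.
    have [hS HhS] := HhXs.
    rewrite /phi HgS HhS HgY.
    case E: (h Y) => [r||] //= _; first by exists r.
    by exfalso; apply: (proj1 Hph _ E).
  - by move: HhXs; rewrite Hxs (Hnact HA) vadd0.
have [hY HhY'] := HhY.
have H6 := h_ineq Hrho Hsh HhX' HhY' Hsub.
have H7 := g_ineq Hrho Hsg HgX HgY HX Hmin.
have HphiY : phi g h Y = Fin (gY - hY) by rewrite /phi HgY HhY'.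
have Hii : exists L, dir_deriv (phi g h) Y (vsub Y X) L /\ ER_le L (Fin (- (rho * norm2 (vsub Y X)))).
  have [r [Hr Hd]] := Hdiff Y (HsubU Y HhY).
  rewrite HgY in Hr; case: Hr => Er; subst r.
  have [L [HL HLe]] := part_ii (c := dot U (vsub Y X) + rho * norm2 (vsub Y X)) Hph Hch HgY HhY' Hd
    (fun t r Ht Hr => h_quot_lb Hrho Hsh HhX' HhY' H6 Ht Hr).
  exists L; split => //; apply: (ER_le_weaken HLe).
  have := grad_opt HgY HX Hmin Hd; lra.
split.
  rewrite HphiY /phi HgX HhX' /=.
  move: H6 H7; rewrite dot_subr; lra.
split => // HA.
have Hd := part_iii Hrho Ha HphiY (proj1 Hmin) HA Hii.
split => // l0 Hl0 _.
exact: (backtrack Hb Hd).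
Qed.
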